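(* Let $\mathcal{A}\subseteq\mathcal{B}$ be sub-$\sigma$-algebras of a complete probability space $(\Omega,\mathcal{F},P)$. Let $x:L_\infty(\mathcal{B})\to L_\infty(\mathcal{A})$ be a linear operator such that \[x(X)\le M(Y)\qquad\text{for all } X\in L_\infty(\mathcal{B}),\ Y\in L^+_\infty(\mathcal{B}) \text{ with } X\le Y,\] for some sublinear operator $M:L^+_\infty(\mathcal{B})\to L^+_\infty(\mathcal{A})$. Then $x$ is monotone. Moreover: (i) if $M$ is weak $\mathcal{A}$-homogeneous, then $x$ is weak $\mathcal{A}$-homogeneous; (ii) if $M$ is regular, then $x$ is continuous from above.
   Context: All (in)equalities hold $P$-a.s. Sublinear: $M(X+Y)\le M(X)+M(Y)$, $M(\lambda X)=\lambda M(X)$ for real $\lambda\ge0$. Weak $\mathcal{A}$-homogeneous: $T(1_AX)=1_AT(X)$ for every $A\in\mathcal{A}$ and every $X$ in the domain of the operator $T$. Regular: for every nonincreasing sequence $X_n\downarrow0$ $P$-a.s., $M(X_n)\to0$ $P$-a.s. Continuous from above: for every nonincreasing sequence $X_n$ with $P$-a.s. limit $X$, $x(X_n)\downarrow x(X)$ $P$-a.s. *)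

(* Defs.v *)
From HB Require Import structures.
From mathcomp Require Import all_boot all_order all_algebra.
From mathcomp Require Import all_classical all_reals all_analysis.
Set Implicit Arguments. Unset Strict Implicit. Unset Printing Implicit Defensive.
Import Order.TTheory GRing.Theory Num.Theory.
Import numFieldTopology.Exports numFieldNormedType.Exports.
Local Open Scope classical_set_scope.
Local Open Scope ring_scope.

Section Defs.
Context d (T : measurableType d) (R : realType) (P : probability T R).

Definition sub_sigma (G : set (set T)) : Prop :=
  sigma_algebra setT G /\ G `<=` measurable.

Definition Gmeasurable (G : set (set T)) (f : T -> R) : Prop :=
  forall U : set R, measurable U -> G (f @^-1` U).

(* representatives of elements of L_infty(G) : bounded G-measurable functions *)
Definition Linf (G : set (set T)) (f : T -> R) : Prop :=
  Gmeasurable G f /\ exists c : R, forall w, `|f w| <= c.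

Definition Linfp (G : set (set T)) (f : T -> R) : Prop :=
  Linf G f /\ {ae P, forall w, 0 <= f w}.

Definition aseq (f g : T -> R) : Prop := {ae P, forall w, f w = g w}.
Definition asle (f g : T -> R) : Prop := {ae P, forall w, f w <= g w}.

(* An operator from L_infty-classes over dom to L_infty-classes over codomain
   Linf A, given on representatives and respecting P-a.s. equality. *)
Definition well_def_op (dom cod : (T -> R) -> Prop) (F : (T -> R) -> (T -> R)) :=
  (forall X, dom X -> cod (F X)) /\
  (forall X Y, dom X -> dom Y -> aseq X Y -> aseq (F X) (F Y)).

Definition linear_op (dom : (T -> R) -> Prop) (F : (T -> R) -> (T -> R)) :=
  (forall X Y, dom X -> dom Y -> aseq (F (X \+ Y)) (F X \+ F Y)) /\
  (forall (c : R) X, dom X -> aseq (F (fun w => c * X w)) (fun w => c * F X w)).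

Definition sublinear_op (dom : (T -> R) -> Prop) (F : (T -> R) -> (T -> R)) :=
  (forall X Y, dom X -> dom Y -> asle (F (X \+ Y)) (F X \+ F Y)) /\
  (forall (c : R) X, 0 <= c -> dom X ->
     aseq (F (fun w => c * X w)) (fun w => c * F X w)).

Definition monotone_op (dom : (T -> R) -> Prop) (F : (T -> R) -> (T -> R)) :=
  forall X Y, dom X -> dom Y -> asle X Y -> asle (F X) (F Y).

Definition weak_homogeneous (A : set (set T)) (dom : (T -> R) -> Prop)
    (F : (T -> R) -> (T -> R)) :=
  forall S X, A S -> dom X ->
    aseq (F (fun w => \1_S w * X w)) (fun w => \1_S w * F X w).

Definition regular_op (dom : (T -> R) -> Prop) (F : (T -> R) -> (T -> R)) :=
  forall X : nat -> T -> R, (forall n, dom (X n)) ->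
    {ae P, forall w, (forall n, X n.+1 w <= X n w) /\ (fun n => X n w) @ \oo --> (0 : R)} ->
    {ae P, forall w, (fun n => F (X n) w) @ \oo --> (0 : R)}.

Definition cont_above_op (dom : (T -> R) -> Prop) (F : (T -> R) -> (T -> R)) :=
  forall (X : nat -> T -> R) (Xl : T -> R), (forall n, dom (X n)) -> dom Xl ->
    {ae P, forall w, (forall n, X n.+1 w <= X n w) /\ (fun n => X n w) @ \oo --> (Xl w : R)} ->
    {ae P, forall w, (forall n, F (X n.+1) w <= F (X n) w) /\
                     (fun n => F (X n) w) @ \oo --> (F Xl w : R)}.
End Defs.

(* Main.v *)
Require Import Defs.
From HB Require Import structures.
From mathcomp Require Import all_boot all_order all_algebra.
From mathcomp Require Import all_classical all_reals all_analysis.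
From mathcomp Require Import measurable_realfun.
Import Order.TTheory GRing.Theory Num.Theory.
Import numFieldTopology.Exports numFieldNormedType.Exports.
Local Open Scope classical_set_scope.
Local Open Scope ring_scope.

Section H.
Context d (T : measurableType d) (R : realType).
Variable B : set (set T).
Hypothesis HB : sigma_algebra setT B.

Let E : (measurable : set (set (g_sigma_algebraType B))) = B.
Proof. by rewrite /measurable /= sigma_algebra_id. Qed.

Lemma GmeasP (f : T -> R) : Gmeasurable B f <->
  measurable_fun (setT : set (g_sigma_algebraType B)) f.
Proof.
split.
- move=> Hf _ U mU; rewrite setTI E; exact: Hf.
- move=> Hf U mU; have := Hf measurableT U mU; by rewrite setTI E.
Qed.

Lemma Linf_add (f g : T -> R) : Linf B f -> Linf B g -> Linf B (f \+ g).
Proof.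
move=> [mf [cf hf]] [mg [cg hg]]; split.
  apply/GmeasP; apply: (@measurable_funD _ (g_sigma_algebraType B) R setT f g);
  exact/GmeasP.
exists (cf + cg) => w; apply: le_trans (ler_normD _ _) _; exact: lerD.
Qed.

Lemma Linf_scale (c : R) (f : T -> R) : Linf B f -> Linf B (fun w => c * f w).
Proof.
move=> [mf [cf hf]]; split.
  apply/GmeasP; apply: (@measurable_funM _ (g_sigma_algebraType B) R setT (cst c) f).
    exact: measurable_cst.
  exact/GmeasP.
exists (`|c| * cf) => w; rewrite normrM; apply: ler_wpM2l => //.
Qed.

Lemma Linf_cst (c : R) : Linf B (fun _ => c).
Proof.
split; last by exists `|c|.
apply/GmeasP; exact: measurable_cst.
Qed.

Lemma Linf_ind S (f : T -> R) : B S -> Linf B f -> Linf B (fun w => \1_S w * f w).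
Proof.
move=> BS [mf [cf hf]]; split.
  apply/GmeasP; apply: (@measurable_funM _ (g_sigma_algebraType B) R setT (\1_S) f).
    apply: measurable_indic; by rewrite E.
  exact/GmeasP.
exists cf => w; rewrite indicE; case: (w \in S); rewrite ?mul1r ?mul0r //.
rewrite normr0; exact: le_trans (normr_ge0 _) (hf w).
Qed.
End H.
Arguments Linf_scale {d T R B}.
Arguments Linf_add {d T R B}.
Arguments Linf_ind {d T R B}.
Arguments Linf_cst {d T R B}.
Section M.
Context d (T : measurableType d) (R : realType) (P : probability T R).

Lemma ae2 (p q r : T -> Prop) : (forall w, p w -> q w -> r w) ->
  {ae P, forall w, p w} -> {ae P, forall w, q w} -> {ae P, forall w, r w}.
Proof. move=> h; exact: filterS2. Qed.

Lemma ae3 (p q r s : T -> Prop) : (forall w, p w -> q w -> r w -> s w) ->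
  {ae P, forall w, p w} -> {ae P, forall w, q w} -> {ae P, forall w, r w} ->
  {ae P, forall w, s w}.
Proof. move=> h; exact: filterS3. Qed.

Lemma ae1 (p q : T -> Prop) : (forall w, p w -> q w) ->
  {ae P, forall w, p w} -> {ae P, forall w, q w}.
Proof. move=> h; exact: filterS. Qed.

Lemma aeT (p : T -> Prop) : (forall w, p w) -> {ae P, forall w, p w}.
Proof. exact: aeW. Qed.
End M.
Arguments ae1 {d T R P p q}.
Arguments ae2 {d T R P p q r}.
Arguments ae3 {d T R P p q r s}.
Arguments aeT {d T R P p}.

Theorem proposition3p8 (d : measure_display) (T : measurableType d) (R : realType)
  (P : probability T R) (HP : measure_is_complete P)
  (A B : set (set T)) (HA : sub_sigma A) (HB : sub_sigma B) (HAB : A `<=` B)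
  (x M : (T -> R) -> (T -> R))
  (Hx : well_def_op P (Linf B) (Linf A) x) (Hxlin : linear_op P (Linf B) x)
  (HM : well_def_op P (Linfp P B) (Linfp P A) M)
  (HMsub : sublinear_op P (Linfp P B) M)
  (HxM : forall X Y, Linf B X -> Linfp P B Y -> asle P X Y -> asle P (x X) (M Y)) :
  monotone_op P (Linf B) x /\
  (weak_homogeneous P A (Linfp P B) M -> weak_homogeneous P A (Linf B) x) /\
  (regular_op P (Linfp P B) M -> cont_above_op P (Linf B) x).
Proof.
have sB := HB.1.
have Lp : forall f : T -> R, Linf B f -> (forall w, 0 <= f w) -> Linfp P B f.
  by move=> f Lf f0; split => //; exact: aeT.
pose z : T -> R := fun _ => 0.
have Lz : Linf B z by exact: (Linf_cst sB).
have M0 : aseq P (M z) z.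
  have := HMsub.2 0 z (lexx _) (Lp _ Lz (fun=> lexx _)).
  have -> : (fun w => 0 * z w) = z by apply/funext => w; rewrite mul0r.
  by apply: ae1 => w ->; rewrite mul0r.
have x0 : aseq P (x z) z.
  have := Hxlin.2 0 z Lz.
  have -> : (fun w => 0 * z w) = z by apply/funext => w; rewrite mul0r.
  by apply: ae1 => w ->; rewrite mul0r.
pose D (X Y : T -> R) := X \+ (fun w => -1 * Y w).
have LD : forall X Y, Linf B X -> Linf B Y -> Linf B (D X Y).
  by move=> X Y LX LY; apply: (Linf_add sB) => //; exact: (Linf_scale sB).
have xneg : forall Y, Linf B Y -> aseq P (x (fun w => -1 * Y w)) (fun w => - x Y w).
  move=> Y LY; apply: ae1 (Hxlin.2 (-1) Y LY) => w ->; by rewrite mulN1r.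
have xsub : forall X Y, Linf B X -> Linf B Y ->
    aseq P (x (D X Y)) (fun w => x X w - x Y w).
  move=> X Y LX LY.
  move: (Hxlin.1 _ _ LX (Linf_scale sB (-1) _ LY)) (xneg Y LY).
  rewrite /D /aseq; apply: ae2 => w -> /= ->; by [].
have mono : monotone_op P (Linf B) x.
  move=> X Y LX LY XY.
  have XYz : asle P (D X Y) z.
    by apply: ae1 XY => w h; rewrite /D /z /= mulN1r subr_le0.
  have h := HxM (D X Y) z (LD _ _ LX LY) (Lp _ Lz (fun=> lexx _)) XYz.
  apply: ae3 h M0 (xsub _ _ LX LY) => w h1 h2 h3.
  by rewrite -subr_le0 -h3 -[0]/(z w) -h2.
split => //; split.
- move=> WH.
  have K : forall S (Z : T -> R) (c : R), A S -> Linf B Z -> 0 <= c ->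
      (forall w, `|Z w| <= \1_S w * c) ->
      aseq P (x Z) (fun w => \1_S w * x Z w).
    move=> S Z c AS LZ c0 bZ.
    pose C : T -> R := fun _ => c.
    have LC : Linf B C by exact: (Linf_cst sB).
    have LpC : Linfp P B C by apply: Lp.
    pose SC : T -> R := fun w => \1_S w * C w.
    have LpSC : Linfp P B SC.
      apply: Lp; first exact: (Linf_ind sB) (HAB _ AS) LC.
      by move=> w; rewrite /SC /C indicE mulr_ge0.
    have h1 := HxM Z SC LZ LpSC (aeT (fun w => le_trans (ler_norm _) (bZ w))).
    have b2 : asle P (fun w => -1 * Z w) SC.
      apply: aeT => w; apply: le_trans (bZ w).
      by rewrite mulN1r; apply: le_trans (ler_norm _) _; rewrite normrN.
    have h2 := HxM _ SC (Linf_scale sB (-1) _ LZ) LpSC b2.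
    have h3 := WH S C AS LpC.
    have h4 := xneg Z LZ.
    have h34 := ae2 (fun w (a : M SC w = \1_S w * M C w) (b : x (fun w => -1 * Z w) w = - x Z w) => conj a b) h3 h4.
    apply: ae3 h1 h2 h34 => w a b [e f].
    move: a b; rewrite e f indicE.
    case: (w \in S) => /= a b; first by rewrite mul1r.
    rewrite mul0r; apply/le_anti; rewrite (mul0r (M C w)) in a b.
    by rewrite a /= -oppr_le0 b.
  move=> S X AS LX.
  have [c0 bX] := LX.2.
  have AC : A (~` S) by rewrite -setTD; case: HA.1 => _ hC _; exact: hC.
  pose Z : T -> R := fun w => \1_S w * X w.
  pose W : T -> R := fun w => \1_(~` S) w * X w.
  have bd : forall S', forall w, `|\1_S' w * X w| <= \1_S' w * `|c0|.
    move=> S' w; rewrite normrM ger0_norm; last by rewrite indicE.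
    apply: ler_wpM2l; first by rewrite indicE.
    exact: le_trans (bX w) (ler_norm _).
  have LZ : Linf B Z by exact: (Linf_ind sB) (HAB _ AS) LX.
  have LW : Linf B W by exact: (Linf_ind sB) (HAB _ AC) LX.
  have hZ := K S Z `|c0| AS LZ (normr_ge0 _) (bd S).
  have hW := K _ W `|c0| AC LW (normr_ge0 _) (bd _).
  have XE : X = Z \+ W.
    apply/funext => w; rewrite /Z /W /= !indicE in_setC.
    by case: (w \in S) => /=; rewrite ?mul1r ?mul0r ?addr0 ?add0r.
  have hl := Hxlin.1 _ _ LZ LW.
  have -> : (fun w => \1_S w * x X w) = (fun w => \1_S w * x (Z \+ W) w) by rewrite -XE.
  apply: ae3 hZ hW hl => w a b /= ->.
  rewrite mulrDr -a b mulrA.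
  have -> : \1_S w * \1_(~` S) w = 0 :> R.
    by rewrite !indicE in_setC; case: (w \in S); rewrite /= ?mul1r ?mul0r.
  by rewrite mul0r addr0.
- move=> RM X Xl LX LXl H.
  pose Y n := D (X n) Xl.
  have LY : forall n, Linf B (Y n) by move=> n; exact: LD.
  have ge : {ae P, forall w, forall n, Xl w <= X n w}.
    apply: ae1 H => w [dec cv] n.
    have := @nonincreasing_cvgn_ge _ (fun k => X k w) _ _ n.
    rewrite (cvg_lim _ cv) //; apply.
      exact/nonincreasing_seqP.

    exact: cv.
  have Yge : forall n, {ae P, forall w, 0 <= Y n w}.
    move=> n; apply: ae1 ge => w h.
    by rewrite /Y /D /= mulN1r subr_ge0.
  have LpY : forall n, Linfp P B (Y n) by move=> n; split; [exact: LY|exact: Yge].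
  have Hreg : {ae P, forall w, (forall n, Y n.+1 w <= Y n w) /\
      (fun n => Y n w) @ \oo --> (0 : R)}.
    apply: ae1 H => w [dec cv]; split.
      by move=> n; rewrite /Y /D /= lerD2r.
    have := cvgD cv (cvg_cst (-1 * Xl w)).
    rewrite (_ : Xl w + -1 * Xl w = 0); last by rewrite mulN1r subrr.
    apply; exact: _.
  have MY := RM Y LpY Hreg.
  have Fall : {ae P, forall w, forall n, x (X n.+1) w <= x (X n) w /\
      x (Y n) w = x (X n) w - x Xl w /\ x (Y n) w <= M (Y n) w /\ x z w <= x (Y n) w}.
    apply: ae_foralln => n.
    have F1 : asle P (x (X n.+1)) (x (X n)).
      apply: mono => //; apply: ae1 H => w [dec _]; exact: dec.
    have F2 := xsub _ _ (LX n) LXl.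
    have F3 := HxM (Y n) (Y n) (LY n) (LpY n) (aeT (fun w => lexx _)).
    have F4 : asle P (x z) (x (Y n)).
      apply: mono => //; exact: Yge.
    have F34 := ae2 (fun w (a : x (Y n) w <= M (Y n) w) (b : x z w <= x (Y n) w) => conj a b) F3 F4.
    by apply: ae3 F1 F2 F34 => w a b c; split => //; split.
  apply: ae3 Fall x0 MY => w F xz mc; split.
    by move=> n; case: (F n).
  have e : (fun n => x (X n) w) = (fun n => x (Y n) w + x Xl w).
    by apply/funext => n; case: (F n) => _ [-> _]; rewrite subrK.
  rewrite e -[X in _ --> X]add0r; apply: cvgD; last exact: cvg_cst.
  apply: (@squeeze_cvgr _ _ _ _ (fun=> 0) (fun n => M (Y n) w)) => //.
    apply: nearW => n; case: (F n) => _ [_ [a b]].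
    by rewrite a andbT; move: b; rewrite xz.
  exact: cvg_cst.
Qed.
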